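(* Let $V$ be a finite dimensional real vector space, let $G$ be an abelian subgroup of $GL(V)$ and let $x\in V$ be a point with a somewhere dense $G$-orbit, i.e. the closure of $G(x)=\{gx: g\in G\}$ contains a non-empty open subset of $V$. Then the isotropy group $G_y=\{g\in G: gy=y\}$ is trivial for every point $y\in G(x)$. *)

(* Defs.v *)
From HB Require Import structures.
From mathcomp Require Import all_boot all_order all_algebra.
From mathcomp Require Import all_classical all_reals all_analysis.
Set Implicit Arguments. Unset Strict Implicit. Unset Printing Implicit Defensive.
Import Order.TTheory GRing.Theory Num.Theory.
Import numFieldTopology.Exports numFieldNormedType.Exports.
Local Open Scope classical_set_scope.
Local Open Scope ring_scope.

(* V = R^n, realised as column vectors 'cV[R]_n; GL(V) = invertible n x n
   matrices acting on the left by g *m v. *)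

Definition is_GL_subgroup (R : realType) (n : nat) (G : set 'M[R]_n) : Prop :=
  [/\ (forall g, G g -> g \in unitmx),
      G 1%:M,
      (forall g h, G g -> G h -> G (g *m h)) &
      (forall g, G g -> G (invmx g))].

Definition is_abelian_set (R : realType) (n : nat) (G : set 'M[R]_n) : Prop :=
  forall g h, G g -> G h -> g *m h = h *m g.

Definition orbit_set (R : realType) (n : nat) (G : set 'M[R]_n) (x : 'cV[R]_n)
  : set 'cV[R]_n := [set g *m x | g in G].

Definition somewhere_dense_orbit (R : realType) (n : nat) (G : set 'M[R]_n)
  (x : 'cV[R]_n) : Prop :=
  exists U : set 'cV[R]_n, [/\ open U, U !=set0 & U `<=` closure (orbit_set G x)].

Definition isotropy (R : realType) (n : nat) (G : set 'M[R]_n) (y : 'cV[R]_n)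
  : set 'M[R]_n := [set g | G g /\ g *m y = y].

(* Main.v *)
Require Import Defs.
From HB Require Import structures.
From mathcomp Require Import all_boot all_order all_algebra.
From mathcomp Require Import all_classical all_reals all_analysis.
From mathcomp Require Import lra.
Import Order.TTheory GRing.Theory Num.Theory.
Import numFieldTopology.Exports numFieldNormedType.Exports.
Local Open Scope classical_set_scope.
Local Open Scope ring_scope.
Set Implicit Arguments. Unset Strict Implicit.

Lemma entry_le (R : realType) m k (v : 'M[R]_(m, k)) i j : `|v i j| <= `|v|.
Proof.
rewrite [leRHS]/Num.Def.normr /= mx_normrE.
exact: (le_bigmax _ (fun ij : 'I_m * 'I_k => `|v ij.1 ij.2|) (i, j)).
Qed.

Lemma mul_le (R : realType) n (A : 'M[R]_n) (v : 'cV[R]_n) i k :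
  `|(A *m v) i k| <= (\sum_j `|A i j|) * `|v|.
Proof.
rewrite mxE big_distrl /=.
apply: le_trans (ler_norm_sum _ _ _) _.
apply: ler_sum => j _; rewrite normrM; apply: ler_wpM2l => //.
exact: entry_le.
Qed.

Lemma eps_le0 (R : realType) (z : R) : (forall e : R, 0 < e -> `|z| <= e) -> z = 0.
Proof.
move=> H; apply/eqP; rewrite -normr_le0; apply/ler_addgt0Pr => e e0.
by rewrite add0r; apply: H.
Qed.

Lemma closure_ker (R : realType) n (A : 'M[R]_n) (S : set 'cV[R]_n) w :
  (forall s, S s -> A *m s = 0) -> closure S w -> A *m w = 0.
Proof.
move=> HS Hw; apply/matrixP => i k; rewrite [RHS]mxE.
apply: eps_le0 => e e0.
set C := \sum_j `|A i j|.
have C0 : 0 <= C by apply: sumr_ge0.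
have d0 : 0 < e / (C + 1) by apply: divr_gt0 => //; lra.
have [s [Ss bs]] : S `&` ball w (e / (C + 1)) !=set0.
  by apply: Hw; apply/nbhs_ballP; exists (e / (C + 1)).
move: bs; rewrite -ball_normE /ball_ /= => bs.
have -> : A *m w = A *m (w - s) by rewrite mulmxBr (HS s Ss) subr0.
apply: (le_trans (mul_le A (w - s) i k)).
apply: le_trans (_ : C * (e / (C + 1)) <= e).
  by apply: ler_wpM2l => //; apply: ltW.
rewrite mulrA ler_pdivrMr; last lra.
nra.
Qed.

Lemma delta_norm (R : realType) n (j : 'I_n) : `|delta_mx j (0 : 'I_1) : 'cV[R]_n| <= 1.
Proof.
rewrite /Num.Def.normr /= mx_normrE.
apply: bigmax_le => // -[a b] _ /=; rewrite mxE.
by case: (_ && _); rewrite ?normr1 ?normr0.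
Qed.

Lemma open_ker (R : realType) n (A : 'M[R]_n) (U : set 'cV[R]_n) :
  open U -> U !=set0 -> (forall w, U w -> A *m w = 0) -> A = 0.
Proof.
move=> oU [u Uu] HU.
have hn : nbhs u U by move: oU; rewrite openE => /(_ u Uu).
have [d d0 sub] : exists2 d : R, 0 < d & ball u d `<=` U.
  by move/nbhs_ballP: hn => [d d0 sub]; exists d.
apply/matrixP => i j; rewrite [RHS]mxE.
have H1 : A *m (u + (d / 2) *: delta_mx j 0) = 0.
  apply: HU; apply: sub; rewrite -ball_normE /ball_ /=.
  rewrite opprD addrA subrr sub0r normrN normrZ.
  have := delta_norm R j.
  have h2 : `|d / 2| = d / 2 by rewrite ger0_norm // divr_ge0 // ltW.
  rewrite h2 => hd.
  have : d / 2 * `|delta_mx j (0 : 'I_1) : 'cV[R]_n| <= d / 2.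
    by rewrite -[leRHS]mulr1; apply: ler_wpM2l => //; lra.
  lra.
rewrite mulmxDr HU // add0r -scalemxAr in H1.
move/eqP: H1; rewrite scaler_eq0 => /orP[/eqP|/eqP H1]; first lra.
have := congr1 (fun M : 'cV[R]_n => M i 0) H1.
by rewrite -colE !mxE.
Qed.

Theorem mainTheorem8 (R : realType) (n : nat) (G : set 'M[R]_n) (x : 'cV[R]_n) :
  is_GL_subgroup G -> is_abelian_set G -> somewhere_dense_orbit G x ->
  forall y, orbit_set G x y -> isotropy G y = [set 1%:M].
Proof.
move=> [Gu G1 GM GV] Gab [U [oU U0 Usub]] y [h Gh <-].
apply/seteqP; split; last first.
  by move=> g /= ->; split => //; rewrite mul1mx.
move=> g [Gg gy] /=.
have gx : g *m x = x.
  move: gy; rewrite mulmxA (Gab g h Gg Gh) -mulmxA => /(congr1 (mulmx (invmx h))).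
  by rewrite !mulKmx // Gu.
have Horb : forall w, orbit_set G x w -> (g - 1%:M) *m w = 0.
  move=> _ [k Gk <-].
  by rewrite mulmxBl mul1mx mulmxA (Gab g k Gg Gk) -mulmxA gx subrr.
have Hcl : forall w, U w -> (g - 1%:M) *m w = 0.
  by move=> w /Usub; apply: closure_ker.
have := open_ker oU U0 Hcl.
by move/eqP; rewrite subr_eq0 => /eqP.
Qed.
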